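(* Let $k$ be a field, $A=kQ_A/I_A$ a monomial algebra with vertices $e_1,\dots,e_n$, and $B=kQ_B/I_B$ the algebra obtained from $A$ by gluing the distinct non-isolated vertices $e_1$ and $e_n$, with quiver morphism $\varphi:Q_A\to Q_B$. Then: (1) $\varphi$ induces a surjective map $\widetilde\varphi:\mathcal B_A\to\mathcal B_B$, $p\mapsto p^*$, such that $\widetilde\varphi^{-1}(p^* )=\{p\}$ for $p^*\ne f_1$ and $\widetilde\varphi^{-1}(f_1)=\{e_1,e_n\}$. (2) For $p,q\in\mathcal B_A$, if $p\|q$ in $Q_A$ then $p^*\|q^*$ in $Q_B$. (3) $\widetilde\varphi$ induces $k$-linear maps $\psi_0:k((Q_A)_0\|\mathcal B_A)\to k((Q_B)_0\|\mathcal B_B)$, $\psi_1:k((Q_A)_1\|\mathcal B_A)\to k((Q_B)_1\|\mathcal B_B)$, $\psi_2:k(Z_A\|\mathcal B_A)\to k(Z_B\|\mathcal B_B)$, each given by $x\|y\mapsto x^*\|y^*$.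
   Context: Monomial algebra: $A=kQ_A/I_A$, $Q_A$ finite quiver, $I_A$ admissible ideal generated by a minimal set $Z_A$ of paths of length $\ge2$; $\mathcal B_A$ is the set of paths of $Q_A$ (including the trivial paths $e_i$) not containing any element of $Z_A$ as a subpath, a basis of $A$. Gluing: $B$ is the subalgebra of $A$ generated by $f_1=e_1+e_n$, $f_i=e_i$ ($2\le i\le n-1$) and all arrows; $B\cong kQ_B/I_B$, where $Q_B$ has vertices $f_1,\dots,f_{n-1}$ and arrows $\alpha^*$ for the arrows $\alpha$ of $Q_A$ with endpoints given by $\varphi$; $\varphi(e_i)=f_i$ ($2\le i\le n-1$), $\varphi(e_1)=\varphi(e_n)=f_1$, $\varphi(\alpha)=\alpha^*$; for a path $p=a_m\cdots a_1$, $p^*=a_m^*\cdots a_1^*$. $I_B$ is generated by $Z_B=\{r^*:r\in Z_A\}\cup\{b^*c^*:b,c\text{ arrows of }Q_A,\ t(c),s(b)\in\{e_1,e_n\},\ t(c)\neq s(b)\}$, and $\mathcal B_B$ is the set of paths of $Q_B$ avoiding $Z_B$. $p\|q$ means $p,q$ have the same source and the same target; for path sets $X,Y$, $k(X\|Y)$ is the vector space with basis the pairs $x\|y$ of parallel paths $x\in X,y\in Y$. *)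

(* Defs.v *)
From HB Require Import structures.
From mathcomp Require Import all_boot all_algebra.
From mathcomp Require Import freeg.
Set Implicit Arguments. Unset Strict Implicit. Unset Printing Implicit Defensive.
Import GRing.Theory.

(* A (candidate) path is a pair (v, [:: a_1; ...; a_m]) : V * seq Ar,     *)
(* read as the path a_m ... a_1 starting at v (arrows listed in the order *)
(* in which they are traversed).  (v, [::]) is the trivial path e_v.      *)

Definition qpath (V Ar : finType) := (V * seq Ar)%type.

Section Paths.
Variables (V Ar : finType) (s t : Ar -> V).

Definition is_qpath (p : qpath V Ar) : bool :=
  match p.2 with
  | [::] => true
  | a :: r => (s a == p.1) && path (fun a b => s b == t a) a r
  end.

Definition psrc (p : qpath V Ar) : V := p.1.
Definition ptgt (p : qpath V Ar) : V := last p.1 [seq t a | a <- p.2].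
Definition plen (p : qpath V Ar) : nat := size p.2.

Definition parallel (p q : qpath V Ar) : bool :=
  (psrc p == psrc q) && (ptgt p == ptgt q).

(* r is a subpath of p: p = w r u for paths u, w.  For a nontrivial r this
   means the arrow word of r is a contiguous factor of that of p; a trivial
   path e_v is a subpath of p iff p passes through v. *)
Definition subpath (r p : qpath V Ar) : bool :=
  if r.2 is [::] then r.1 \in p.1 :: [seq t a | a <- p.2]
  else infix r.2 p.2.

Definition pbasis (Z : seq (qpath V Ar)) (p : qpath V Ar) : bool :=
  is_qpath p && ~~ has (fun z => subpath z p) Z.

Definition is_vertex_path (p : qpath V Ar) : bool := p.2 == [::].
Definition is_arrow_path (p : qpath V Ar) : bool := is_qpath p && (size p.2 == 1%N).

(* Z is a minimal set of paths of length >= 2 generating an admissible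
   ideal I = <Z> of kQ (monomial algebra kQ/I). *)
Definition monomial_relations (Z : seq (qpath V Ar)) : Prop :=
  [/\ all is_qpath Z,
      all (fun z => 2 <= plen z) Z,
      uniq Z,
      (forall z z', z \in Z -> z' \in Z -> subpath z z' -> z = z') &
      (* admissibility: R^N is contained in I for some N *)
      (exists N : nat, forall p, is_qpath p -> N <= plen p ->
                        has (fun z => subpath z p) Z)].

End Paths.

(* We work inside the free k-vector space {freeg P / k} on the type P of   *)
(* pairs of paths; k(X||Y) is the subspace spanned by the basis pairs      *)
(* x||y with x in X, y in Y, x || y.                                       *)

Definition ppairs (V Ar : finType) := (qpath V Ar * qpath V Ar)%type.

Definition par_basis (V Ar : finType) (s t : Ar -> V)
  (X Y : pred (qpath V Ar)) (xy : ppairs V Ar) : bool :=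
  [&& X xy.1, Y xy.2 & parallel t xy.1 xy.2].

Definition in_par_space (k : fieldType) (V Ar : finType) (s t : Ar -> V)
  (X Y : pred (qpath V Ar)) (D : {freeg (ppairs V Ar) / k}) : Prop :=
  forall xy, coeff xy D != 0%R -> par_basis s t X Y xy.

Definition bvec (k : fieldType) (K : choiceType) (x : K) : {freeg K / k} :=
  [freeg [:: (1%R, x)]].

(* Q_B has vertex type {v : V | v != en}; the vertex e1 of this subtype   *)
(* plays the role of f_1 = e_1 + e_n, and the other vertices e_i play the *)
(* role of f_i.  The arrows of Q_B are the alpha^*, identified with the   *)
(* arrows alpha of Q_A.                                                    *)

Section Gluing.
Variables (V Ar : finType) (s t : Ar -> V) (e1 en : V) (h1n : e1 != en).

Definition gV : finType := {v : V | v != en}.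

Definition f1 : gV := exist (fun v => v != en) e1 h1n.

Definition phiV (v : V) : gV := insubd f1 v.

Definition sB (a : Ar) : gV := phiV (s a).
Definition tB (a : Ar) : gV := phiV (t a).

Definition pstar (p : qpath V Ar) : qpath gV Ar := (phiV p.1, p.2).

Definition pairstar (xy : ppairs V Ar) : ppairs gV Ar :=
  (pstar xy.1, pstar xy.2).

Definition ZB (ZA : seq (qpath V Ar)) : seq (qpath gV Ar) :=
  [seq pstar r | r <- ZA] ++
  [seq (phiV (s bc.2), [:: bc.2; bc.1]) |
     bc <- [seq (b, c) | b <- enum Ar, c <- enum Ar] &
     [&& t bc.2 \in [:: e1; en], s bc.1 \in [:: e1; en] & t bc.2 != s bc.1]].

End Gluing.

Definition non_isolated (V Ar : finType) (s t : Ar -> V) (v : V) : Prop :=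
  exists a : Ar, s a = v \/ t a = v.

Definition induces_linear_map (k : fieldType) (V Ar : finType) (s t : Ar -> V)
  (e1 en : V) (h1n : e1 != en)
  (XA YA : pred (qpath V Ar)) (XB YB : pred (qpath (gV en) Ar)) : Prop :=
  exists psi : {linear {freeg (ppairs V Ar) / k} -> {freeg (ppairs (gV en) Ar) / k}},
    (forall D, in_par_space s t XA YA D ->
               in_par_space (sB s h1n) (tB t h1n) XB YB (psi D)) /\
    (forall xy, par_basis s t XA YA xy ->
               psi (bvec k xy) = bvec k (pairstar h1n xy)).

(* Main.v *)
Require Import Defs.
From HB Require Import structures.
From mathcomp Require Import all_boot all_algebra.
From mathcomp Require Import freeg.
Set Implicit Arguments. Unset Strict Implicit. Unset Printing Implicit Defensive.

Lemma sorted2P (T : eqType) (e : rel T) (l : seq T) :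
  sorted e l <-> (forall c b, infix [:: c; b] l -> e c b).
Proof.
elim: l => [|x l IH]; first by split => // c b.
case: l IH => [|y l] IH; first by split => // _ c b /=; rewrite andbF.
have -> : sorted e [:: x, y & l] = e x y && sorted e (y :: l) by [].
split.
- move=> /andP[hxy hp] c b; rewrite infix_consl !prefix_cons prefix0s andbT.
  case/orP; first by case/andP => /eqP -> /eqP ->.
  by move/(IH.1 hp).
- move=> H; apply/andP; split.
    by apply: H; rewrite infix_consl !prefix_cons prefix0s !eqxx.
  apply/IH => c b hi; apply: H; by rewrite infix_consl hi orbT.
Qed.

Section Gl.
Variables (V Ar : finType) (s t : Ar -> V) (e1 en : V) (h1n : e1 != en).

Local Notation phi := (phiV h1n).

Lemma val_phiV v : val (phi v) = if v == en then e1 else v.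
Proof. by rewrite /phiV val_insubd; case: eqP => //. Qed.

Lemma phiV_f1 v : v \in [:: e1; en] -> phi v = f1 h1n.
Proof.
move=> hv; apply: val_inj; rewrite val_phiV.
by move: hv; rewrite !inE => /orP[] /eqP ->; rewrite ?eqxx ?(negbTE h1n).
Qed.

Lemma phiV_f1_inv v : phi v = f1 h1n -> v = e1 \/ v = en.
Proof.
move/(congr1 val); rewrite val_phiV /=.
by case: eqP => [->|_ ->]; [right|left].
Qed.

Lemma phiV_val (w : gV en) : phi (val w) = w.
Proof.
apply: val_inj; rewrite val_phiV; case: eqP => // E.
by have := valP w; rewrite E eqxx.
Qed.

Lemma glue_step a b : phi (s b) = phi (t a) ->
  ~~ [&& t a \in [:: e1; en], s b \in [:: e1; en] & t a != s b] -> s b = t a.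
Proof.
move/(congr1 val); rewrite !val_phiV !inE.
have ne := h1n.
case: (s b =P en) => [->|hs]; case: (t a =P en) => [->|ht] //=.
- by move=> <-; rewrite eqxx /= orbT.
- by move=> E; rewrite E eqxx /= orbT (eq_sym en e1) ne.
Qed.

Lemma qpath_star p : is_qpath s t p -> is_qpath (sB s h1n) (tB t h1n) (pstar h1n p).
Proof.
case: p => v [|a r] //; rewrite /is_qpath /= => /andP[/eqP Ea hp].
rewrite /sB Ea eqxx /=; apply: sub_path hp => x y /eqP E.
by rewrite /sB /tB E.
Qed.

Lemma qpath_pairs p c b : is_qpath s t p -> infix [:: c; b] p.2 -> s b = t c.
Proof.
case: p => v [|a r] //= /andP[_ hp] hi.
by apply/eqP; apply: ((sorted2P (fun a b => s b == t a) (a :: r)).1 hp c b hi).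
Qed.

Lemma subpath_star r p : r.2 != [::] ->
  subpath (tB t h1n) (pstar h1n r) (pstar h1n p) = subpath t r p.
Proof. by case: r => v [|a l]. Qed.

Lemma ptgt_star p : ptgt (tB t h1n) (pstar h1n p) = phi (ptgt t p).
Proof.
rewrite /ptgt /pstar /= -(last_map phi).
by rewrite -map_comp.
Qed.

Lemma par_star p q : parallel t p q ->
  parallel (tB t h1n) (pstar h1n p) (pstar h1n q).
Proof.
rewrite /parallel !ptgt_star /psrc /= => /andP[/eqP -> /eqP ->].
by rewrite !eqxx.
Qed.

Lemma ZB_bad ZA b c :
  [&& t c \in [:: e1; en], s b \in [:: e1; en] & t c != s b] ->
  (phi (s c), [:: c; b]) \in ZB s t h1n ZA.
Proof.
move=> H; rewrite /ZB mem_cat; apply/orP; right.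
apply: (map_f (fun bc : Ar * Ar => (phi (s bc.2), [:: bc.2; bc.1]))
   (x := (b, c))).
by rewrite mem_filter H /=; apply: allpairs_f; rewrite mem_enum.
Qed.

Lemma ZB_star ZA r : r \in ZA -> pstar h1n r \in ZB s t h1n ZA.
Proof. by move=> H; rewrite /ZB mem_cat map_f. Qed.

End Gl.
Import GRing.Theory.


Definition fgmap (k : fieldType) (K L : choiceType) (f : K -> L)
  (D : {freeg K / k}) : {freeg L / k} := fglift (fun x => bvec k (f x)) D.

Section FG.
Local Open Scope ring_scope.
Variables (k : fieldType) (K L : choiceType) (f : K -> L).

HB.instance Definition _ := GRing.isAdditive.Build _ _ (@fgmap k K L f)
  (lift_is_additive (fun x => bvec k (f x))).

Lemma fgmapE D : fgmap f D = \sum_(z <- dom D) coeff z D *: bvec k (f z).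
Proof.
rewrite -{1}(freeg_sumE D) raddf_sum; apply: eq_bigr => z _.
exact: liftU.
Qed.

Lemma fgmapZ : scalable (@fgmap k K L f).
Proof.
move=> c D.
have -> : c *: D = \sum_(x <- dom D) << c * (coeff x D) *g x >> by [].
rewrite raddf_sum fgmapE scaler_sumr; apply: eq_bigr => z _.
rewrite scalerA; exact: liftU.
Qed.

HB.instance Definition _ := GRing.isScalable.Build k _ _ *:%R (@fgmap k K L f) fgmapZ.

Definition fgmapL : {linear {freeg K / k} -> {freeg L / k}} := @fgmap k K L f.

Lemma fgmap_bvec x : @fgmap k K L f (bvec k x) = bvec k (f x).
Proof. by rewrite /fgmap /bvec liftU scale1r. Qed.

Lemma coeff_fgmap D y : coeff y (@fgmap k K L f D) != 0 ->
  exists2 x, coeff x D != 0 & f x = y.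
Proof.
rewrite fgmapE raddf_sum => H.
case: (boolP (has (fun x => f x == y) (dom D))) => [/hasP [x xin /eqP fx] | /hasPn hn].
  by exists x; rewrite // -mem_dom.
move/negP: H; case; apply/eqP.
rewrite big_seq big1 // => z zin.
by rewrite /= coeffZ /bvec coeffU mul1r (negbTE (hn z zin)) mulr0.
Qed.
End FG.
Lemma ilm (k : fieldType) (V Ar : finType) (s t : Ar -> V) (e1 en : V) (h1n : e1 != en)
  (XA YA : pred (qpath V Ar)) (XB YB : pred (qpath (gV en) Ar)) :
  (forall x, XA x -> XB (pstar h1n x)) -> (forall y, YA y -> YB (pstar h1n y)) ->
  induces_linear_map k s t h1n XA YA XB YB.
Proof.
move=> HX HY; exists (@fgmapL k _ _ (pairstar h1n)); split.
- move=> D HD xy /coeff_fgmap [z /HD /and3P[hx hy hp] <-].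
  apply/and3P; split; [exact: HX| exact: HY| exact: par_star].
- move=> xy _; exact: fgmap_bvec.
Qed.
Unset Implicit Arguments.
Theorem proposition3p3 (k : fieldType) (V Ar : finType) (s t : Ar -> V)
  (e1 en : V) (h1n : e1 != en) (ZA : seq (qpath V Ar)) :
  monomial_relations s t ZA ->
  non_isolated s t e1 -> non_isolated s t en ->
  let sb := sB s h1n in
  let tb := tB t h1n in
  let ZB := ZB s t h1n ZA in
  let BA := pbasis s t ZA in
  let BB := pbasis sb tb ZB in
  let st := pstar h1n in
  let F1 : qpath (gV en) Ar := (f1 h1n, [::]) in
  (* (1) *)
  [/\ (forall p, BA p -> BB (st p)),
      (forall q, BB q -> exists2 p, BA p & st p = q),
      (forall p q, BA p -> BA q -> st p = st q -> st p != F1 -> p = q) &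
      (forall p, (BA p /\ st p = F1) <-> (p = (e1, [::]) \/ p = (en, [::])))] /\
  (* (2) *)
  (forall p q, BA p -> BA q -> parallel t p q -> parallel tb (st p) (st q)) /\
  (* (3) *)
  [/\ induces_linear_map k s t h1n (@is_vertex_path V Ar) BA
                               (@is_vertex_path (gV en) Ar) BB,
      induces_linear_map k s t h1n (is_arrow_path s t) BA (is_arrow_path sb tb) BB &
      induces_linear_map k s t h1n (fun x => x \in ZA) BA (fun x => x \in ZB) BB].
Proof.
move=> [ZAq ZAlen ZAuniq ZAmin ZAadm] _ _ sb tb ZB' BA BB st F1.
subst sb tb ZB' BA BB st F1.
have nonempty : forall r, r \in ZA -> r.2 != [::].
  move=> r rin; have := allP ZAlen r rin; rewrite /plen; by case: r.2.
have triv v : pbasis s t ZA (v, [::]).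
  rewrite /pbasis /=; apply/hasPn => r rin; rewrite /subpath.
  by case: r rin => u [|a l] rin //; have := nonempty _ rin.
have part1a p : pbasis s t ZA p -> pbasis (sB s h1n) (tB t h1n) (ZB s t h1n ZA) (pstar h1n p).
  move=> /andP[qp nz]; apply/andP; split; first exact: qpath_star.
  rewrite has_cat negb_or; apply/andP; split.
  - rewrite has_map; apply/hasPn => r rin /=; rewrite subpath_star ?nonempty //.
    exact: (hasPn nz).
  - apply/hasPn => z /mapP [[b c]]; rewrite mem_filter => /andP[/and3P[_ _ hne] _] -> .
    apply/negP => hi; have := qpath_pairs qp hi.
    by move=> E; move: hne; rewrite E eqxx.
split; last split.
- split.
  + exact: part1a.
  + move=> [w l] /andP[qq nz]; case: l qq nz => [|a r] qq nz.
      by exists (val w, [::]); rewrite // /pstar /= phiV_val.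
    move: (qq); rewrite /is_qpath /= => /andP[/eqP ha hp].
    have Est : pstar h1n (s a, a :: r) = (w, a :: r) by rewrite /pstar /= -ha.
    exists (s a, a :: r); last exact Est.
    apply/andP; split.
    * rewrite /is_qpath /= eqxx /=.
      apply: (sorted2P (fun x y => s y == t x) (a :: r)).2 => c b hi.
      apply/eqP; apply: (glue_step (h1n := h1n)).
        apply/eqP; exact: ((sorted2P (fun x y => sB s h1n y == tB t h1n x) (a :: r)).1 hp c b hi).
      apply/negP => bad; have zin := ZB_bad h1n ZA bad.
      by move/hasPn: nz => /(_ _ zin) /negP; apply.
    * apply/hasPn => r0 r0in; apply/negP => sub.
      move/hasPn: nz => /(_ _ (ZB_star s t h1n r0in)) /negP; apply.
      by rewrite -Est subpath_star ?nonempty.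
  + have nf : forall u, phiV h1n u != f1 h1n -> u != en.
      move=> u; apply: contra => /eqP ->; apply/eqP; apply: phiV_f1.
      by rewrite !inE eqxx orbT.
    move=> [v l] [v' l'] /andP[qp _] /andP[qp' _]; rewrite /pstar /= => -[Ev El].
    subst l'; case: l qp qp' => [|a r] qp qp' hne.
      have h : phiV h1n v != f1 h1n by apply: contra hne => /eqP ->.
      have hv := nf _ h; have hv' : v' != en by apply: nf; rewrite -Ev.
      by move/(congr1 val): Ev; rewrite !val_phiV (negbTE hv) (negbTE hv') => ->.
    by move: qp qp'; rewrite /is_qpath /= => /andP[/eqP <- _] /andP[/eqP <- _].
  + move=> [v l]; split.
      move=> [_]; rewrite /pstar /= => -[/phiV_f1_inv [->|->] ->]; by [left|right].
    by case=> ->; (split; [exact: triv | by rewrite /pstar /= phiV_f1 // !inE eqxx ?orbT]).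
- move=> p q _ _; exact: par_star.
- split; apply: ilm; try exact: part1a.
  + by move=> [v l].
  + by move=> x /andP[qx sz]; apply/andP; split; [exact: qpath_star | exact: sz].
  + by move=> x xin; exact: ZB_star.
Qed.
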